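(* Let $\alpha\ge\aleph_0$ be a cardinal, let $X$ be a commutative topological $\alpha$-generated algebra over $\mathbb{K}$ which is first-countable, and let $M\subset X$. Then $M$ is $\alpha$-infinitely strongly $\alpha$-dense-algebrable if and only if $M$ is strongly $\alpha$-dense-algebrable.
   Context: Algebras are associative linear algebras over $\mathbb{K}$ ($\mathbb{R}$ or $\mathbb{C}$); a topological algebra has continuous sum, product and scalar multiplication. An algebra is $\alpha$-generated if $\alpha$ is the smallest cardinality of a subset generating it as an algebra. $\langle S\rangle$ is the subalgebra generated by $S$. With $\mathbb{P}_n$ the polynomials in $n$ variables without constant term, $S$ is a set of free generators (SFG) if $P(x_1,\dots,x_n)\neq0$ for every $n$, every non-zero $P\in\mathbb{P}_n$ and all pairwise distinct $x_1,\dots,x_n\in S$. An $\alpha$-generated free subalgebra is $\langle F\rangle$ with $F$ an SFG of cardinality $\alpha$. $M$ is strongly $\alpha$-dense-algebrable if $M\cup\{0\}$ contains a dense $\alpha$-generated free subalgebra of $X$; $M$ is $\alpha$-infinitely strongly $\alpha$-dense-algebrable if there is a family $\{Y_\kappa\}_{\kappa<\alpha}$ of dense $\alpha$-generated free subalgebras of $X$ with $Y_\kappa\subset M\cup\{0\}$ and $Y_{\kappa_1}\cap Y_{\kappa_2}=\{0\}$ for $\kappa_1\neq\kappa_2$. *)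

(* Defs.v *)
From HB Require Import structures.
From mathcomp Require Import all_boot all_order all_algebra.
From mathcomp Require Import mpoly.
From mathcomp Require Import all_classical all_reals all_analysis.
From mathcomp Require complex.
Import complex.

Set Implicit Arguments.
Unset Strict Implicit.
Unset Printing Implicit Defensive.

Import Order.TTheory GRing.Theory Num.Theory.
Local Open Scope classical_set_scope.
Local Open Scope ring_scope.

Definition scalarK (R : realType) (b : bool) : numFieldType :=
  if b then (R : numFieldType) else (complex R : numFieldType).

Section Alg.
Variables (K : numFieldType) (X : topologicalLmodType K).
Variable mul : X -> X -> X.

(* (X, +, *:, mul) is a commutative associative K-algebra (not necessarily
   unital) whose product is (jointly) continuous; continuity of + and *:
   is part of the topologicalLmodType structure. *)
Definition comm_top_algebra : Prop :=
  [/\ (forall x y z, mul x (mul y z) = mul (mul x y) z),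
      (forall x y, mul x y = mul y x),
      (forall (a : K) x y z, mul (a *: x + y) z = a *: mul x z + mul y z)
    & continuous (fun p : X * X => mul p.1 p.2)].

Definition first_countable : Prop :=
  forall x : X, exists B : nat -> set X,
    (forall k, nbhs x (B k)) /\
    (forall U, nbhs x U -> exists k, B k `<=` U).

Definition subalgebra (Y : set X) : Prop :=
  [/\ Y 0,
      (forall x y, Y x -> Y y -> Y (x + y)),
      (forall (a : K) x, Y x -> Y (a *: x))
    & (forall x y, Y x -> Y y -> Y (mul x y))].

Definition gen (S : set X) : set X :=
  \bigcap_(Y in [set Y | subalgebra Y /\ S `<=` Y]) Y.

Definition nprod (s : seq X) : X :=
  if s is a :: s' then foldl mul a s' else 0.

Definition mono_eval n (m : mpoly.multinom n) (x : 'I_n -> X) : X :=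
  nprod (flatten [seq nseq (mpoly.fun_of_multinom m i) (x i) | i <- enum 'I_n]).

Definition peval n (P : mpoly.mpoly n K) (x : 'I_n -> X) : X :=
  \sum_(m <- mpoly.msupp P) mpoly.mcoeff m P *: mono_eval m x.

Definition no_const n (P : mpoly.mpoly n K) : Prop :=
  mpoly.mcoeff (@mpoly.mnm0 n) P = 0.

Definition SFG (S : set X) : Prop :=
  forall (n : nat) (P : mpoly.mpoly n K) (x : 'I_n -> X),
    no_const P -> P != 0 -> injective x -> (forall i, S (x i)) ->
    peval P x != 0.

Variable I : Type. (* a type of cardinality alpha *)

Definition alpha_generated : Prop :=
  (exists S : set X, (S #= [set: I])%card /\ gen S = [set: X]) /\
  (forall S : set X, gen S = [set: X] -> ([set: I] #<= S)%card).

Definition alpha_free_subalgebra (Y : set X) : Prop :=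
  exists F : set X, SFG F /\ (F #= [set: I])%card /\ Y = gen F.

Definition strongly_dense_algebrable (M : set X) : Prop :=
  exists Y : set X, alpha_free_subalgebra Y /\ dense Y /\ Y `<=` M `|` [set 0].

Definition infinitely_strongly_dense_algebrable (M : set X) : Prop :=
  exists Yk : I -> set X,
    (forall k, alpha_free_subalgebra (Yk k) /\ dense (Yk k) /\
               Yk k `<=` M `|` [set 0]) /\
    (forall k1 k2, k1 <> k2 -> Yk k1 `&` Yk k2 = [set 0]).

End Alg.

(* Main.v *)
Require Import Defs.
From HB Require Import structures.
From mathcomp Require Import all_boot all_order all_algebra.
From mathcomp Require Import mpoly.
From mathcomp Require Import all_classical all_reals all_analysis.
Set Implicit Arguments.
Unset Strict Implicit.
Unset Printing Implicit Defensive.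
Import Order.TTheory GRing.Theory Num.Theory.
Local Open Scope classical_set_scope.
Local Open Scope ring_scope.

Definition pt (T : Type) (t0 : T) : Type := T.
HB.instance Definition _ (T : Type) (t0 : T) := gen_eqMixin (pt t0).
HB.instance Definition _ (T : Type) (t0 : T) := gen_choiceMixin (pt t0).
HB.instance Definition _ (T : Type) (t0 : T) := isPointed.Build (pt t0) t0.

Lemma le_of_inj (T U : Type) (A : set T) (B : set U) (f : T -> U) (u0 : U) :
  (forall x, A x -> B (f x)) -> {in A &, injective f} -> (A #<= B)%card.
Proof.
move=> fAB finj.
have /(@pcard_leP T (Pointed.clone (pt u0) _)) // : $|{injfun A >-> (B : set (Pointed.clone (pt u0) _))}|.
apply/injfunPex; exists f => //.
Qed.

Lemma inj_of_le (T U : Type) (A : set T) (B : set U) (u0 : U) :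
  (A #<= B)%card -> exists f : T -> U, (forall x, A x -> B (f x)) /\ {in A &, injective f}.
Proof.
move=> /(@pcard_leP T (Pointed.clone (pt u0) _) A B) /injfunPex [f fAB finj].
by exists f; split.
Qed.

Lemma bij_of_eq (T U : Type) (A : set T) (B : set U) (u0 : U) :
  (A #= B)%card -> exists f : T -> U, set_bij A B f.
Proof. by move=> /(@pcard_eqP T (Pointed.clone (pt u0) _) A B) /bijPex. Qed.

Lemma bij_of_eq' (T U : Type) (A : set T) (B : set U) (u0 : U) :
  (A #= B)%card -> exists f : T -> U, [/\ (forall x, A x -> B (f x)),
     (forall x y, A x -> A y -> f x = f y -> x = y) &
     (forall y, B y -> exists2 x, A x & f x = y)].
Proof.
move=> /(bij_of_eq u0) [f [ff fi fs]]; exists f; split.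
- by move=> x Ax; apply: ff.
- by move=> x y Ax Ay; apply: fi; rewrite inE.
- by move=> y /fs [x Ax <-]; exists x.
Qed.

Lemma le_of_inj' (T U : Type) (A : set T) (B : set U) (f : T -> U) (u0 : U) :
  (forall x, A x -> B (f x)) -> (forall x y, A x -> A y -> f x = f y -> x = y) -> (A #<= B)%card.
Proof. by move=> fAB fi; apply: (le_of_inj u0 fAB) => x y; rewrite !inE; apply: fi. Qed.

Lemma inj_of_le' (T U : Type) (A : set T) (B : set U) (u0 : U) :
  (A #<= B)%card -> exists f : T -> U, (forall x, A x -> B (f x)) /\
     (forall x y, A x -> A y -> f x = f y -> x = y).
Proof.
move=> /(inj_of_le u0) [f [fAB fi]]; exists f; split => // x y Ax Ay; apply: fi; by rewrite inE.
Qed.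

Lemma card_cmp (T : Type) (A D : set T) :
  (exists h : T -> T, (forall a, A a -> D (h a)) /\ (forall a a', A a -> A a' -> h a = h a' -> a = a')) \/
  (exists h : T -> T, (forall d, D d -> A (h d)) /\ (forall d d', D d -> D d' -> h d = h d' -> d = d')).
Proof.
pose P := fun H : set (T * T) => [/\ (forall a d, H (a, d) -> A a /\ D d),
  (forall a d d', H (a, d) -> H (a, d') -> d = d') &
  (forall a a' d, H (a, d) -> H (a', d) -> a = a')].
have [H [[HAD Hf Hi] Hmax]] : exists H, P H /\ (forall B, H `<` B -> ~ P B).
  apply: Zorn_bigcup => Fa FP Ftot; split.
  - by move=> a d [H FH Had]; have [] := FP _ FH; move=> /(_ _ _ Had).
  - move=> a d d' [H1 F1 H1a] [H2 F2 H2a].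
    have [S12|S21] := Ftot _ _ F1 F2.
      by have [_ f _] := FP _ F2; apply: f (S12 _ H1a) H2a.
    by have [_ f _] := FP _ F1; apply: f H1a (S21 _ H2a).
  - move=> a a' d [H1 F1 H1a] [H2 F2 H2a].
    have [S12|S21] := Ftot _ _ F1 F2.
      by have [_ _ f] := FP _ F2; apply: f (S12 _ H1a) H2a.
    by have [_ _ f] := FP _ F1; apply: f H1a (S21 _ H2a).
have [allA|[a0 [Aa0 na0]]] : (forall a, A a -> exists d, H (a, d)) \/ exists a, A a /\ forall d, ~ H (a, d).
  apply: boolp.contrapT => /boolp.not_orP [/boolp.existsNP [a /boolp.not_implyP [Aa /boolp.forallNP na]] ne].
  by apply: ne; exists a.
  left; pose h a := if boolp.pselect (exists d, H (a, d)) is left pf then projT1 (cid pf) else a.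
  have hH a : A a -> H (a, h a).
    move=> Aa; rewrite /h; case: boolp.pselect => [pf|[]]; last exact: allA.
    exact: projT2 (cid pf).
  exists h; split.
    by move=> a Aa; have [] := HAD _ _ (hH a Aa).
  by move=> a a' Aa Aa' E; apply: (Hi a a' (h a)) (hH a Aa) _; rewrite E; apply: hH.
have [allD|[d0 [Dd0 nd0]]] : (forall d, D d -> exists a, H (a, d)) \/ exists d, D d /\ forall a, ~ H (a, d).
  apply: boolp.contrapT => /boolp.not_orP [/boolp.existsNP [d /boolp.not_implyP [Dd /boolp.forallNP nd]] ne].
  by apply: ne; exists d.
  right; pose h d := if boolp.pselect (exists a, H (a, d)) is left pf then projT1 (cid pf) else d.
  have hH d : D d -> H (h d, d).
    move=> Dd; rewrite /h; case: boolp.pselect => [pf|[]]; last exact: allD.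
    exact: projT2 (cid pf).
  exists h; split.
    by move=> d Dd; have [] := HAD _ _ (hH d Dd).
  by move=> d d' Dd Dd' E; apply: (Hf (h d) d d') (hH d Dd) _; rewrite E; apply: hH.
exfalso; apply: (Hmax (H `|` [set (a0, d0)])).
  split; first by move=> x Hx; left.
  move=> E; have : (H `|` [set (a0, d0)]) (a0, d0) by right.
  by move/E => /na0.
split.
- by move=> a d [/HAD //|[-> ->]].
- move=> a d d' [Ha|Ea] [Ha'|Eb].
  + exact: Hf Ha Ha'.
  + by case: Eb Ha => -> _ /na0.
  + by case: Ea Ha' => -> _ /na0.
  + by case: Ea => _ ->; case: Eb => _ ->.
- move=> a a' d [Ha|Ea] [Ha'|Eb].
  + exact: Hi Ha Ha'.
  + by case: Eb Ha => _ -> /nd0.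
  + by case: Ea Ha' => _ -> /nd0.
  + by case: Ea => -> _; case: Eb => -> _.
Qed.

Section Sq.
Variable I : Type.
Variable io : nat -> I.
Hypothesis io_inj : injective io.

Definition rg (G : set (I * I * I)) : set I := fun z => exists a b, G (a, b, z).

Definition Good (G : set (I * I * I)) :=
  [/\ (forall a b y y', G (a, b, y) -> G (a, b, y') -> y = y'),
      (forall a b a' b' y, G (a, b, y) -> G (a', b', y) -> (a, b) = (a', b')),
      (forall a b y, G (a, b, y) -> rg G a /\ rg G b) &
      (forall a b, rg G a -> rg G b -> exists y, G (a, b, y))].

Lemma Good_union (Fa : set (set (I * I * I))) : (forall G, Fa G -> Good G) ->
  total_on Fa subset -> Good (\bigcup_(X in Fa) X).
Proof.
move=> FG Ftot.
have rgU X a : Fa X -> rg X a -> rg (\bigcup_(X in Fa) X) a.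
  by move=> FX [a1 [b1 H]]; exists a1, b1, X.
split.
- move=> a b y y' [X1 F1 H1] [X2 F2 H2].
  have [S|S] := Ftot _ _ F1 F2.
    by have [f _ _ _] := FG _ F2; apply: f (S _ H1) H2.
  by have [f _ _ _] := FG _ F1; apply: f H1 (S _ H2).
- move=> a b a' b' y [X1 F1 H1] [X2 F2 H2].
  have [S|S] := Ftot _ _ F1 F2.
    by have [_ f _ _] := FG _ F2; apply: f (S _ H1) H2.
  by have [_ f _ _] := FG _ F1; apply: f H1 (S _ H2).
- move=> a b y [X F1 H1]; have [_ _ f _] := FG _ F1.
  by have [ra rb] := f _ _ _ H1; split; [exact: (rgU X a F1 ra) | exact: (rgU X b F1 rb)].
- move=> a b [a1 [b1 [X1 F1 H1]]] [a2 [b2 [X2 F2 H2]]].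
  have [S|S] := Ftot _ _ F1 F2.
    have [_ _ _ g] := FG _ F2.
    have [y Hy] := g a b (ex_intro _ a1 (ex_intro _ b1 (S _ H1))) (ex_intro _ a2 (ex_intro _ b2 H2)).
    by exists y, X2.
  have [_ _ _ g] := FG _ F1.
  have [y Hy] := g a b (ex_intro _ a1 (ex_intro _ b1 H1)) (ex_intro _ a2 (ex_intro _ b2 (S _ H2))).
  by exists y, X1.
Qed.

Definition gv (G : set (I * I * I)) (a b : I) : I :=
  if boolp.pselect (exists y, G (a, b, y)) is left pf then projT1 (cid pf) else io 0.

Lemma gvP G a b : (exists y, G (a, b, y)) -> G (a, b, gv G a b).
Proof. by rewrite /gv; case: boolp.pselect => // pf _; exact: projT2 (cid pf). Qed.

Lemma gvG G a b : Good G -> rg G a -> rg G b -> G (a, b, gv G a b).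
Proof. by move=> [_ _ _ g] ra rb; apply: gvP; apply: g. Qed.

Lemma gv_rg G a b : Good G -> rg G a -> rg G b -> rg G (gv G a b).
Proof. by move=> Gg ra rb; exists a, b; apply: gvG. Qed.

Lemma gv_inj G a b a' b' : Good G -> rg G a -> rg G b -> rg G a' -> rg G b' ->
  gv G a b = gv G a' b' -> (a, b) = (a', b').
Proof.
move=> Gg ra rb ra' rb' E; have [_ i _ _] := Gg.
by apply: (i _ _ _ _ (gv G a b)); [apply: gvG | rewrite E; apply: gvG].
Qed.

Lemma sq_inj : exists f : I * I -> I, injective f.
Proof.
have [be [_ bei bes]] := bij_of_eq' 0%N card_nat2.
pose G0 : set (I * I * I) := fun q => exists a b, q = (io a, io b, io (be (a, b))).
have rgG0 z : rg G0 z <-> exists n, z = io n.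
  split; first by move=> [? [? [a [b [_ _ ->]]]]]; exists (be (a, b)).
  move=> [n ->]; have [[a b] _ E] := bes n Logic.I; exists (io a), (io b), a, b; by rewrite E.
have G0g : Good G0.
  split.
  - move=> a b y y' [a1 [b1 [-> -> ->]]] [a2 [b2 [/io_inj E1 /io_inj E2 ->]]].
    by rewrite E1 E2.
  - move=> a b a' b' y [a1 [b1 [-> -> ->]]] [a2 [b2 [-> -> /io_inj /bei]]].
    by move=> /(_ Logic.I Logic.I) [-> ->].
  - by move=> a b y [a1 [b1 [-> -> _]]]; split; apply/rgG0; eexists.
  - move=> a b /rgG0 [n ->] /rgG0 [m ->]; exists (io (be (n, m))); by exists n, m.
pose P := fun G => Good G /\ (G = set0 \/ G0 `<=` G).
have [G [[Gg G0G] Gmax]] : exists G, P G /\ (forall B, G `<` B -> ~ P B).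
  apply: Zorn_bigcup => Fa FP Ftot; split.
    by apply: Good_union => // X /FP [].
  have [[X FX SX]|nX] := boolp.pselect (exists2 X, Fa X & G0 `<=` X).
    by right => q G0q; exists X => //; apply: SX.
  left; apply/seteqP; split => // q [X FX Xq].
  have [_ [X0|SX]] := FP _ FX; first by move: Xq; rewrite X0.
  by exfalso; apply: nX; exists X.
have {}G0G : G0 `<=` G.
  case: G0G => // G0E; exfalso; apply: (Gmax G0); last by split => //; right.
  rewrite G0E; split => // /(_ (io 0, io 0, io (be (0, 0))%N)) H.
  by apply: H; exists 0%N, 0%N.
pose A := rg G.
have ioA n : A (io n).
  have [[a b] _ E] := bes n Logic.I; exists (io a), (io b); apply: G0G; exists a, b; by rewrite E.
have a01 : io 0 <> io 1 by move/io_inj.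
have gA a b : A a -> A b -> A (gv G a b) by move=> ra rb; apply: gv_rg.
have gI a b a' b' : A a -> A b -> A a' -> A b' -> gv G a b = gv G a' b' -> a = a' /\ b = b'.
  by move=> ra rb ra' rb' E; case: (gv_inj Gg ra rb ra' rb' E) => -> ->.
have [[h [hD hi]]|[h [hA hi]]] := card_cmp A (~` A); last first.
  pose j x := if boolp.pselect (A x) then gv G x (io 0) else gv G (h x) (io 1).
  have jA x : A (j x).
    by rewrite /j; case: boolp.pselect => Ax; apply: gA => //; apply: hA.
  have ji x y : j x = j y -> x = y.
    rewrite /j; case: boolp.pselect => Ax; case: boolp.pselect => Ay.
    - by move=> E; case: (gI _ _ _ _ Ax (ioA 0%N) Ay (ioA 0%N) E).
    - by move=> E; case: (gI _ _ _ _ Ax (ioA 0%N) (hA y Ay) (ioA 1%N) E) => _ /a01.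
    - by move=> E; case: (gI _ _ _ _ (hA x Ax) (ioA 1%N) Ay (ioA 0%N) E) => _ /esym /a01.
    - move=> E; case: (gI _ _ _ _ (hA x Ax) (ioA 1%N) (hA y Ay) (ioA 1%N) E) => E' _.
      exact: hi E'.
  exists (fun p => gv G (j p.1) (j p.2)) => -[x y] [x' y'] /= E.
  by case: (gI _ _ _ _ (jA x) (jA y) (jA x') (jA y') E) => /ji -> /ji ->.
exfalso.
pose B := fun x => exists2 a, A a & h a = x.
have BD x : B x -> ~ A x by case => a Aa <-; apply: hD.
pose hinv x := if boolp.pselect (exists a, A a /\ h a = x) is left pf then projT1 (cid pf) else x.
have hinvP x : B x -> A (hinv x) /\ h (hinv x) = x.
  move=> [a Aa ha]; rewrite /hinv; case: boolp.pselect => [pf|[]]; last by exists a.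
  exact: projT2 (cid pf).
pose k x := if boolp.pselect (A x) then gv G x (io 0) else gv G (hinv x) (io 1).
have kA x : A x \/ B x -> A (k x).
  move=> Hx; rewrite /k; case: boolp.pselect => Ax; first by apply: gA.
  have Bx : B x by case: Hx.
  by apply: gA => //; case: (hinvP _ Bx).
have ki x y : A x \/ B x -> A y \/ B y -> k x = k y -> x = y.
  move=> Hx Hy; rewrite /k; case: boolp.pselect => Ax; case: boolp.pselect => Ay.
  - by move=> E; case: (gI _ _ _ _ Ax (ioA 0%N) Ay (ioA 0%N) E).
  - have By : B y by case: Hy.
    by move=> E; case: (gI _ _ _ _ Ax (ioA 0%N) (proj1 (hinvP _ By)) (ioA 1%N) E) => _ /a01.
  - have Bx : B x by case: Hx.
    by move=> E; case: (gI _ _ _ _ (proj1 (hinvP _ Bx)) (ioA 1%N) Ay (ioA 0%N) E) => _ /esym /a01.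
  - have Bx : B x by case: Hx.
    have By : B y by case: Hy.
    move=> E; case: (gI _ _ _ _ (proj1 (hinvP _ Bx)) (ioA 1%N) (proj1 (hinvP _ By)) (ioA 1%N) E) => E' _.
    by rewrite -(proj2 (hinvP _ Bx)) E' (proj2 (hinvP _ By)).
pose C : set (I * I) := fun p => [/\ A p.1 \/ B p.1, A p.2 \/ B p.2 & ~ (A p.1 /\ A p.2)].
have CB : (C #= B)%card.
  apply: Cantor_Bernstein.
  - apply: (@le_of_inj' _ _ C B (fun p => h (gv G (k p.1) (k p.2))) (io 0)).
      by move=> p [Hx Hy _]; exists (gv G (k p.1) (k p.2)) => //; apply: gA; apply: kA.
    move=> [x y] [x' y'] Cxy Cxy' E; case: Cxy => /= Hx Hy _; case: Cxy' => /= Hx' Hy' _.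
    have := hi _ _ (gA _ _ (kA _ Hx) (kA _ Hy)) (gA _ _ (kA _ Hx') (kA _ Hy')) E.
    move=> /(gI _ _ _ _ (kA _ Hx) (kA _ Hy) (kA _ Hx') (kA _ Hy')) [].
    by move=> /(ki _ _ Hx Hx') -> /(ki _ _ Hy Hy') ->.
  - apply: (@le_of_inj' _ _ B C (fun b => (b, b)) (io 0, io 0)).
      by move=> b Bb; split => //=; [right|right|move=> [/BD]].
    by move=> b b' _ _ [].
have [kap [kC kI kS]] := bij_of_eq' (io 0) CB.
pose G' : set (I * I * I) := G `|` (fun q => C q.1 /\ q.2 = kap q.1).
have rgG' z : rg G' z <-> A z \/ B z.
  split.
    move=> [a [b [Gq|[Cq /= ->]]]]; first by left; exists a, b.
    by right; apply: kC.
  move=> [[a [b Gq]]|/kS [[a b] Cab <-]]; first by exists a, b; left.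
  by exists a, b; right.
have [Gf Gi G3 G4] := Gg.
have G'g : Good G'.
  split.
  - move=> a b y y' [H1|[C1 /= ->]] [H2|[C2 /= ->]] //.
    + exact: Gf H1 H2.
    + by case: C2 => _ _ nA; exfalso; apply: nA; exact: G3 H1.
    + by case: C1 => _ _ nA; exfalso; apply: nA; exact: G3 H2.
  - move=> a b a' b' y [H1|[C1 /= E1]] [H2|[C2 /= E2]].
    + exact: Gi H1 H2.
    + by have := BD _ (kC _ C2); rewrite -E2 => nA; exfalso; apply: nA; exists a, b.
    + by have := BD _ (kC _ C1); rewrite -E1 => nA; exfalso; apply: nA; exists a', b'.
    + by apply: kI => //; rewrite -E1 -E2.
  - move=> a b y [H1|[C1 _]].
      by have [ra rb] := G3 _ _ _ H1; split; apply/rgG'; left.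
    by case: C1 => /= ra rb _; split; apply/rgG'.
  - move=> a b /rgG' ra /rgG' rb.
    have [[Aa Ab]|nAB] := boolp.pselect (A a /\ A b).
      by have [y Hy] := G4 _ _ Aa Ab; exists y; left.
    by exists (kap (a, b)); right; split.
have hb : B (h (io 0)) by exists (io 0).
apply: (Gmax G').
  split; first by move=> q Gq; left.
  move=> /(_ (h (io 0), h (io 0), kap (h (io 0), h (io 0)))) H.
  have : G (h (io 0), h (io 0), kap (h (io 0), h (io 0))).
    by apply: H; right; split => //=; split => //; [right|right|move=> [/BD]].
  by move=> /G3 [/BD].
split => //; right => q /G0G Gq; by left.
Qed.
End Sq.

Lemma inf_nat (I : Type) : infinite_set [set: I] -> exists io : nat -> I, injective io.
Proof.
move=> Iinf; have [i0 _] := infinite_setN0 Iinf.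
have [f [_ fi]] := inj_of_le' i0 ((infiniteP _).1 Iinf).
by exists f => x y; apply: fi.
Qed.

Lemma natI_bij (I : Type) (io : nat -> I) (sq : I * I -> I) : injective io -> injective sq ->
  exists eb : nat * I -> I, injective eb /\ (forall i, exists p, eb p = i).
Proof.
move=> ii si.
have CB : ([set: nat * I] #= [set: I])%card.
  apply: Cantor_Bernstein.
    apply: (@le_of_inj' _ _ _ _ (fun p : nat * I => sq (io p.1, p.2)) (io 0)) => //.
    by move=> [a x] [b y] _ _ /si [/ii -> ->].
  apply: (@le_of_inj' _ _ _ _ (fun i : I => (0%N, i)) (0%N, io 0)) => //.
  by move=> x y _ _ [].
have [eb [_ ebi ebs]] := bij_of_eq' (io 0) CB.
exists eb; split; first by move=> x y; apply: ebi.
by move=> i; have [p _ <-] := ebs i Logic.I; exists p.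
Qed.

Lemma Qk_card (I : Type) (io : nat -> I) (sq : I * I -> I) (k : I) : injective io -> injective sq ->
  ([set q : I * nat * I * nat | q.1.1.1 = k] #= [set: I])%card.
Proof.
move=> ii si; apply: Cantor_Bernstein.
  apply: (@le_of_inj' _ _ _ _ (fun q : I * nat * I * nat => sq (io q.1.1.2, sq (q.1.2, io q.2))) (io 0)) => //.
  move=> [[[k1 l1] i1] n1] [[[k2 l2] i2] n2] /= -> -> /si [/ii -> /si [-> /ii ->]].
  by [].
apply: (@le_of_inj' _ _ _ _ (fun i : I => (k, 0%N, i, 0%N)) (k, 0%N, io 0, 0%N)) => //.
by move=> x y _ _ [].
Qed.

Lemma nbhs_pairP (T U : topologicalType) (x : T) (y : U) (A : set (T * U)) :
  nbhs (x, y) A -> exists A1 A2, [/\ nbhs x A1, nbhs y A2 & forall a b, A1 a -> A2 b -> A (a, b)].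
Proof.
move=> [[A1 A2] /= [n1 n2] sub]; exists A1, A2; split => // a b a1 b2.
by apply: sub; split.
Qed.



Lemma mmap_comp (R S : comRingType) n k (f : {rmorphism R -> S}) (h : 'I_k -> S)
  (p : {mpoly R[n]}) (lq : n.-tuple {mpoly R[k]}) :
  mmap f h (p \mPo lq) = mmap f (fun i => mmap f h (tnth lq i)) p.
Proof.
rewrite comp_mpolyEX raddf_sum /mmap /=; apply: eq_bigr => m _.
rewrite mmapZ comp_mpolyX rmorph_prod /mmap1; congr (_ * _).
by apply: eq_bigr => i _; rewrite rmorphXn.
Qed.

Lemma mmap_comp2 (R S : comRingType) n k (f : {rmorphism R -> S}) (h : 'I_k -> S)
  (p : {mpoly R[n]}) (lq : n.-tuple {mpoly R[k]}) (h2 : 'I_n -> S) :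
  (forall i, h2 i = mmap f h (tnth lq i)) ->
  mmap f h (p \mPo lq) = mmap f h2 p.
Proof.
move=> H; rewrite mmap_comp; congr mmap; apply: boolp.funext => i; by rewrite H.
Qed.

Lemma comp_mpolyA (R : comRingType) n k j (p : {mpoly R[n]}) (lq : n.-tuple {mpoly R[k]})
  (lr : k.-tuple {mpoly R[j]}) :
  (p \mPo lq) \mPo lr = p \mPo [tuple (tnth lq i) \mPo lr | i < n].
Proof.
rewrite {1}/comp_mpoly mmap_comp /comp_mpoly; congr mmap.
by apply: boolp.funext => i; rewrite tnth_mktuple.
Qed.


Definition catv (T : Type) n1 n2 (x : 'I_n1 -> T) (y : 'I_n2 -> T) : 'I_(n1 + n2) -> T :=
  fun j => match fintype.split j with inl i => x i | inr i => y i end.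

Lemma catv_l n1 n2 (T : Type) (x : 'I_n1 -> T) (y : 'I_n2 -> T) i : catv x y (lshift n2 i) = x i.
Proof. by rewrite /catv (unsplitK (inl _ i)). Qed.
Lemma catv_r n1 n2 (T : Type) (x : 'I_n1 -> T) (y : 'I_n2 -> T) i : catv x y (rshift n1 i) = y i.
Proof. by rewrite /catv (unsplitK (inr _ i)). Qed.

Lemma catv_inj (T : Type) n1 n2 (x : 'I_n1 -> T) (y : 'I_n2 -> T) :
  injective x -> injective y -> (forall i j, x i <> y j) -> injective (catv x y).
Proof.
move=> ix iy xy j1 j2; rewrite -(splitK j1) -(splitK j2) /catv.
case: (fintype.split j1) => a; case: (fintype.split j2) => b; rewrite !unsplitK.
- by move/ix ->.
- by move/xy.
- by move/esym/xy.
- by move/iy ->.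
Qed.

Section Unit.
Variables (K : numFieldType) (X : topologicalLmodType K) (mul : X -> X -> X).
Hypothesis mulA : forall x y z, mul x (mul y z) = mul (mul x y) z.
Hypothesis mulC : forall x y, mul x y = mul y x.
Hypothesis mulL : forall (a : K) x y z, mul (a *: x + y) z = a *: mul x z + mul y z.
Hypothesis mulc : continuous (fun p : X * X => mul p.1 p.2).

Lemma mXDl x y z : mul (x + y) z = mul x z + mul y z.
Proof. by have := mulL 1 x y z; rewrite !scale1r. Qed.
Lemma mX0l z : mul 0 z = 0.
Proof. have H := mXDl 0 0 z; rewrite addr0 in H. by apply: (addrI (mul 0 z)); rewrite addr0 -H. Qed.
Lemma mXZl a x z : mul (a *: x) z = a *: mul x z.
Proof. by rewrite -[a *: x]addr0 mulL mX0l addr0. Qed.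
Lemma mXDr x y z : mul z (x + y) = mul z x + mul z y.
Proof. by rewrite mulC mXDl !(mulC z). Qed.
Lemma mXZr a x z : mul z (a *: x) = a *: mul z x.
Proof. by rewrite mulC mXZl mulC. Qed.
Lemma mX0r z : mul z 0 = 0.
Proof. by rewrite mulC mX0l. Qed.

Definition U := (K * X)%type.
HB.instance Definition _ := GRing.Zmodule.on U.
Definition umul (u v : U) : U := (u.1 * v.1, u.1 *: v.2 + v.1 *: u.2 + mul u.2 v.2).
Definition uone : U := (1, 0).

Lemma addU (a : K) x b y : ((a, x) + (b, y) : U) = (a + b, x + y). Proof. by []. Qed.
Lemma oppU (a : K) x : (- (a, x) : U) = (- a, - x). Proof. by []. Qed.
Lemma zeroU : (0 : U) = (0, 0). Proof. by []. Qed.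

Lemma umulA : associative umul.
Proof.
move=> [a x] [b y] [c z]; rewrite /umul /=; congr pair; first by rewrite mulrA.
rewrite !scalerDr !mXDl !mXDr !mXZl !mXZr !scalerA !mulA.
rewrite [c * a]mulrC [c * b]mulrC -!addrA; congr (_ + _).
rewrite (addrCA (c *: mul x y) (a *: mul y z)). rewrite (addrCA (c *: mul x y) (b *: mul x z)).
by rewrite (addrCA (a *: mul y z)).
Qed.

Lemma umulC : commutative umul.
Proof. by move=> [a x] [b y]; rewrite /umul /= mulrC mulC (addrC (a *: y)). Qed.
Lemma umul1 : left_id uone umul.
Proof. by move=> [a x]; rewrite /umul /= mul1r scale1r scaler0 mX0l !addr0. Qed.
Lemma umulDl : left_distributive umul +%R.
Proof.
move=> [a x] [b y] [c z]; rewrite /umul /= addU; congr pair; first by rewrite mulrDl.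
rewrite scalerDl scalerDr mXDl -!addrA; congr (_ + _).
rewrite addrCA; congr (_ + _). by rewrite (addrCA (mul x z)) (addrCA (mul x z)).

Qed.
Lemma uone_neq0 : uone != 0.
Proof. by apply/negP => /eqP [] /eqP; rewrite oner_eq0. Qed.

HB.instance Definition _ := GRing.Zmodule_isComNzRing.Build U umulA umulC umul1 umulDl uone_neq0.

Definition uC (c : K) : U := (c, 0).
Lemma uC_is_zmod : zmod_morphism uC.
Proof. by move=> a b; rewrite /uC; congr pair; rewrite subrr. Qed.
Lemma uC_is_mul : monoid_morphism uC.
Proof.
split=> // a b; rewrite /uC /= /GRing.mul /= /umul /=.
by rewrite !scaler0 mX0l !addr0.
Qed.
HB.instance Definition _ := GRing.isZmodMorphism.Build K U uC uC_is_zmod.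
HB.instance Definition _ := GRing.isMonoidMorphism.Build K U uC uC_is_mul.


Lemma mulU (a : K) x b y : (((a, x) : U) * ((b, y) : U)) = (a * b, a *: y + b *: x + mul x y).
Proof. by []. Qed.

Lemma foldl_mul a b s : foldl mul (mul a b) s = mul a (foldl mul b s).
Proof. by elim: s b => //= c s IH b; rewrite -mulA IH. Qed.

Lemma emb_prod (s : seq X) :
  \prod_(y <- s) ((0, y) : U) = if s is [::] then 1 else (0, nprod mul s).
Proof.
elim: s => [|a s IH]; first by rewrite big_nil.
rewrite big_cons IH; case: s {IH} => [|b s]; first by rewrite mulr1.
by rewrite mulU /= mul0r !scale0r !add0r /= foldl_mul.
Qed.

Lemma snd_emb (s : seq X) : (\prod_(y <- s) ((0, y) : U)).2 = nprod mul s.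
Proof. by rewrite emb_prod; case: s. Qed.

Lemma iter_mul (u : U) k : iter k (GRing.mul u) 1 = u ^+ k.
Proof. by elim: k => //= k ->; rewrite exprS. Qed.

Definition hU n (x : 'I_n -> X) : 'I_n -> U := fun i => (0, x i).

Lemma mmap1_emb n (x : 'I_n -> X) (m : 'X_{1..n}) :
  mmap1 (hU x) m = \prod_(y <- flatten [seq nseq (m i) (x i) | i <- enum 'I_n]) ((0, y) : U).
Proof.
rewrite big_flatten big_map /mmap1 big_enum /=.
by apply: eq_bigr => i _; rewrite big_nseq iter_mul.
Qed.

Lemma fst_prod I (r : seq I) (F : I -> U) : (\prod_(i <- r) F i).1 = \prod_(i <- r) (F i).1.
Proof.
elim: r => [|a r IH]; first by rewrite !big_nil.
by rewrite !big_cons -IH; case: (F a) => ? ?; case: (\prod_(j <- r) F j) => ? ?.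
Qed.

Lemma fst_exp (u : U) k : (u ^+ k).1 = u.1 ^+ k.
Proof. by elim: k => // k IH; rewrite !exprS -IH; case: (u ^+ k) => ? ?; case: u {IH} => ? ?. Qed.

Lemma fst_mmap1 n (x : 'I_n -> X) (m : 'X_{1..n}) : (mmap1 (hU x) m).1 = (m == 0%MM)%:R.
Proof.
rewrite /mmap1 fst_prod; under eq_bigr do rewrite fst_exp /=.
case: eqP => [->|/eqP nz].
  by apply: big1 => i _; rewrite mnm0E expr0.
have [i mi] : exists i, m i != 0%N.
  apply/existsP; apply: contraR nz => /existsPn H; apply/eqP/mnmP => i.
  by rewrite mnm0E; move/negPn/eqP: (H i).
by rewrite (bigD1 i) //= expr0n (negbTE mi) mul0r.
Qed.

Lemma sum_pair I (r : seq I) (F : I -> K) (G : I -> X) :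
  \sum_(i <- r) ((F i, G i) : U) = (\sum_(i <- r) F i, \sum_(i <- r) G i).
Proof.
elim: r => [|a r IH]; first by rewrite !big_nil.
by rewrite !big_cons IH addU.
Qed.

Lemma mmap_peval n (p : {mpoly K[n]}) (x : 'I_n -> X) :
  mmap uC (hU x) p = (p@_0, peval mul p x).
Proof.
rewrite /mmap.
have E m : uC p@_m * mmap1 (hU x) m = (p@_m * (m == 0%MM)%:R, p@_m *: mono_eval mul m x).
  rewrite -(fst_mmap1 x) /mono_eval -snd_emb -(mmap1_emb x).
  by case: (mmap1 _ _) => a y; rewrite /uC mulU /= scaler0 mX0l !addr0.
under eq_bigr do rewrite E.
rewrite sum_pair; congr pair.
rewrite {3}[p]mpolyE raddf_sum /=.
by apply: eq_bigr => m _; rewrite mcoeffZ mcoeffX.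
Qed.


Lemma peval_ext n (p : {mpoly K[n]}) (x y : 'I_n -> X) : x =1 y -> peval mul p x = peval mul p y.
Proof.
move=> E; rewrite /peval; apply: eq_bigr => m _; congr (_ *: _).
by rewrite /mono_eval; congr nprod; congr flatten; apply: eq_map => i; rewrite E.
Qed.

Lemma pevalE n (p : {mpoly K[n]}) (x : 'I_n -> X) : peval mul p x = (mmap uC (hU x) p).2.
Proof. by rewrite mmap_peval. Qed.

Lemma const_mmap n (p : {mpoly K[n]}) (x : 'I_n -> X) : p@_0 = (mmap uC (hU x) p).1.
Proof. by rewrite mmap_peval. Qed.

Lemma peval0 n (x : 'I_n -> X) : peval mul 0 x = 0.
Proof. by rewrite pevalE mmap0. Qed.

Lemma pevalD n (p q : {mpoly K[n]}) (x : 'I_n -> X) :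
  peval mul (p + q) x = peval mul p x + peval mul q x.
Proof. by rewrite !pevalE mmapD; case: (mmap _ _ p) => ? ?; case: (mmap _ _ q). Qed.

Lemma pevalN n (p : {mpoly K[n]}) (x : 'I_n -> X) :
  peval mul (- p) x = - peval mul p x.
Proof. by rewrite !pevalE mmapN; case: (mmap _ _ p). Qed.

Lemma pevalB n (p q : {mpoly K[n]}) (x : 'I_n -> X) :
  peval mul (p - q) x = peval mul p x - peval mul q x.
Proof. by rewrite pevalD pevalN. Qed.

Lemma pevalZ n c (p : {mpoly K[n]}) (x : 'I_n -> X) :
  peval mul (c *: p) x = c *: peval mul p x.
Proof.
rewrite !pevalE mmapZ; case: (mmap _ _ p) => a y.
by rewrite /uC mulU /= scaler0 mX0l !addr0.
Qed.

Lemma pevalX n (i : 'I_n) (x : 'I_n -> X) : peval mul 'X_i x = x i.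
Proof. by rewrite pevalE mmapX mmap1U. Qed.

Lemma constX n (i : 'I_n) : ('X_i : {mpoly K[n]})@_0 = 0.
Proof. by rewrite mcoeffX mnm1_eq0. Qed.

Lemma pevalM n (p q : {mpoly K[n]}) (x : 'I_n -> X) : p@_0 = 0 -> q@_0 = 0 ->
  peval mul (p * q) x = mul (peval mul p x) (peval mul q x).
Proof.
rewrite !(const_mmap _ x) !pevalE.
have -> : mmap uC (hU x) (p * q) = mmap uC (hU x) p * mmap uC (hU x) q by exact: rmorphM.
by case: (mmap _ _ p) => a y; case: (mmap _ _ q) => b z /= -> ->; rewrite !scale0r !add0r.
Qed.

Lemma constM n (p q : {mpoly K[n]}) : (p * q)@_0 = p@_0 * q@_0.
Proof.
rewrite !(const_mmap _ (fun _ => 0)).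
have -> : mmap uC (hU (fun _ => 0)) (p * q) = mmap uC (hU (fun _ => 0)) p * mmap uC (hU (fun _ => 0)) q by exact: rmorphM.
by case: (mmap _ _ p) => a y; case: (mmap _ _ q).
Qed.

Lemma peval_comp n k (p : {mpoly K[n]}) (lq : n.-tuple {mpoly K[k]}) (x : 'I_k -> X) :
  (forall i, (tnth lq i)@_0 = 0) ->
  peval mul (p \mPo lq) x = peval mul p (fun i => peval mul (tnth lq i) x) /\
  (p \mPo lq)@_0 = p@_0.
Proof.
move=> H.
have E : mmap uC (hU x) (p \mPo lq) = mmap uC (hU (fun i => peval mul (tnth lq i) x)) p.
  by apply: mmap_comp2 => i; rewrite mmap_peval H.
by move: E; rewrite !mmap_peval => -[-> ->].
Qed.

Lemma peval_comp1 n k (p : {mpoly K[n]}) (lq : n.-tuple {mpoly K[k]}) (x : 'I_k -> X) :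
  (forall i, (tnth lq i)@_0 = 0) ->
  peval mul (p \mPo lq) x = peval mul p (fun i => peval mul (tnth lq i) x).
Proof. by move=> H; case: (peval_comp p x H). Qed.

Lemma const_comp n k (p : {mpoly K[n]}) (lq : n.-tuple {mpoly K[k]}) :
  (forall i, (tnth lq i)@_0 = 0) -> (p \mPo lq)@_0 = p@_0.
Proof. by move=> H; case: (peval_comp p (fun _ => 0) H). Qed.

Lemma nprod0 (s : seq X) : all (eq_op^~ 0) s -> nprod mul s = 0.
Proof.
case: s => //= a s /andP[/eqP -> _].
by elim: s => //= b s IH; rewrite mX0l.
Qed.

Lemma peval_at0 n (p : {mpoly K[n]}) : peval mul p (fun _ => 0) = 0.
Proof.
rewrite /peval big1 // => m _; rewrite /mono_eval nprod0 ?scaler0 //.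
apply/allP => y /flattenP [s /mapP [i _ ->]] /nseqP [-> _]; exact: eqxx.
Qed.
Lemma normalize n (x : 'I_n -> X) : exists m (v : 'I_m -> X) (g : 'I_n -> 'I_m),
  [/\ injective v, (forall i, v (g i) = x i) & (forall j, exists i, v j = x i)].
Proof.
pose s := undup [seq x i | i <- enum 'I_n].
have xs i : x i \in s by rewrite mem_undup; apply: map_f; rewrite mem_enum.
exists (size s), (fun j => nth 0 s j), (fun i => Ordinal (eq_ind_r _ (xs i) (index_mem (x i) s))).
split.
- move=> j1 j2 /eqP; rewrite nth_uniq ?undup_uniq // => /eqP; exact: val_inj.
- by move=> i /=; rewrite nth_index.
- move=> j; have := mem_nth 0 (ltn_ord j); rewrite mem_undup => /mapP [i _ ->].
  by exists i.
Qed.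

Definition tX n k (g : 'I_n -> 'I_k) : n.-tuple {mpoly K[k]} := [tuple 'X_(g i) | i < n].

Lemma tX_const n k (g : 'I_n -> 'I_k) i : (tnth (tX g) i)@_0 = 0.
Proof. by rewrite tnth_mktuple constX. Qed.

Lemma peval_tX n k (g : 'I_n -> 'I_k) (p : {mpoly K[n]}) (v : 'I_k -> X) :
  peval mul (p \mPo tX g) v = peval mul p (fun i => v (g i)).
Proof.
rewrite peval_comp1; last exact: tX_const.
by apply: peval_ext => i; rewrite tnth_mktuple pevalX.
Qed.

Lemma const_tX n k (g : 'I_n -> 'I_k) (p : {mpoly K[n]}) : (p \mPo tX g)@_0 = p@_0.
Proof. by apply: const_comp; exact: tX_const. Qed.

Definition repr_set (S : set X) : set X := fun y =>
  exists n (P : {mpoly K[n]}) (x : 'I_n -> X), [/\ P@_0 = 0, (forall i, S (x i)) & y = peval mul P x].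

Lemma repr_inj S y : repr_set S y -> exists n (P : {mpoly K[n]}) (x : 'I_n -> X),
  [/\ P@_0 = 0, injective x, (forall i, S (x i)) & y = peval mul P x].
Proof.
move=> [n [P [x [P0 Sx ->]]]].
have [m [v [g [iv vg vx]]]] := normalize x.
exists m, (P \mPo tX g), v; split => //.
- by rewrite const_tX.
- by move=> j; have [i ->] := vx j.
- by rewrite peval_tX; apply: peval_ext => i; rewrite vg.
Qed.

Lemma subalg_repr S : subalgebra mul (repr_set S).
Proof.
split.
- exists 0%N, 0, (fun _ => 0).
  split; first by rewrite mcoeff0.
    by move=> [].
  by rewrite peval0.
- move=> _ _ [n1 [P [x [P0 Sx ->]]]] [n2 [Q [y [Q0 Sy ->]]]].
  exists (n1 + n2)%N, ((P \mPo tX (lshift n2)) + (Q \mPo tX (@rshift n1 n2))), (catv x y).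
  split.
  + by rewrite mcoeffD !const_tX P0 Q0 addr0.
  + by move=> j; rewrite /catv; case: (fintype.split j).
  + rewrite pevalD !peval_tX; congr (_ + _); apply: peval_ext => i.
      by rewrite catv_l.
    by rewrite catv_r.
- move=> a _ [n [P [x [P0 Sx ->]]]]; exists n, (a *: P), x; split => //.
    by rewrite mcoeffZ P0 mulr0.
  by rewrite pevalZ.
- move=> _ _ [n1 [P [x [P0 Sx ->]]]] [n2 [Q [y [Q0 Sy ->]]]].
  exists (n1 + n2)%N, ((P \mPo tX (lshift n2)) * (Q \mPo tX (@rshift n1 n2))), (catv x y).
  split.
  + by rewrite constM !const_tX P0 Q0 mulr0.
  + by move=> j; rewrite /catv; case: (fintype.split j).
  + rewrite pevalM ?const_tX // !peval_tX; congr mul; apply: peval_ext => i.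
      by rewrite catv_l.
    by rewrite catv_r.
Qed.

Lemma sub_repr S : S `<=` repr_set S.
Proof.
move=> s Ss; exists 1%N, 'X_ord0, (fun _ => s); split => //.
  exact: constX.
by rewrite pevalX.
Qed.

Lemma gen_sub S Y : subalgebra mul Y -> S `<=` Y -> gen mul S `<=` Y.
Proof. by move=> sY SY y; apply; split. Qed.

Lemma gen_repr S : gen mul S `<=` repr_set S.
Proof. apply: gen_sub; [exact: subalg_repr | exact: sub_repr]. Qed.

Lemma sub_gen S : S `<=` gen mul S.
Proof. by move=> s Ss Y [_ SY]; apply: SY. Qed.

Lemma gen_subalg S : subalgebra mul (gen mul S).
Proof.
split.
- by move=> Y [[]].
- move=> x y gx gy Y HY; case: (HY) => [[_ YD _ _] _]; apply: YD; [exact: gx HY | exact: gy HY].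
- move=> a x gx Y HY; case: (HY) => [[_ _ YZ _] _]; apply: YZ; exact: gx HY.
- move=> x y gx gy Y HY; case: (HY) => [[_ _ _ YM] _]; apply: YM; [exact: gx HY | exact: gy HY].
Qed.


Definition adh (Z : set X) (x : X) := forall B, nbhs x B -> exists z, Z z /\ B z.

Lemma adh_binop (f : X * X -> X) (Z : set X) x y : continuous f ->
  (forall a b, Z a -> Z b -> Z (f (a, b))) -> adh Z x -> adh Z y -> adh Z (f (x, y)).
Proof.
move=> fc fZ ax ay B hB.
have := fc (x, y) B hB => /nbhs_pairP [A1 [A2 [n1 n2 sub]]].
have [a [Za A1a]] := ax _ n1; have [b [Zb A2b]] := ay _ n2.
by exists (f (a, b)); split; [apply: fZ | apply: sub].
Qed.

Lemma adh_scale (Z : set X) (c : K) x :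
  (forall a, Z a -> Z (c *: a)) -> adh Z x -> adh Z (c *: x).
Proof.
move=> cZ ax B hB.
have := @scale_continuous K X (c, x) B hB => /nbhs_pairP [A1 [A2 [n1 n2 sub]]].
have [a [Za A2a]] := ax _ n2.
exists (c *: a); split; first exact: cZ.
exact: (sub c a (nbhs_singleton n1) A2a).
Qed.

Lemma adh_subalg (Z : set X) : subalgebra mul Z -> subalgebra mul (adh Z).
Proof.
move=> [Z0 ZD ZZ ZM]; split.
- move=> B hB; exists 0; split => //; exact: nbhs_singleton.
- move=> x y ax ay; apply: (adh_binop (f := fun p : X * X => p.1 + p.2)) => //.
    exact: add_continuous.
- by move=> c x; apply: adh_scale; apply: ZZ.
- by move=> x y ax ay; apply: (adh_binop (f := fun p : X * X => mul p.1 p.2)).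
Qed.

Lemma adh_sub (Z : set X) : Z `<=` adh Z.
Proof. by move=> z Zz B hB; exists z; split => //; apply: nbhs_singleton. Qed.

Lemma dense_adh (Y Z : set X) : dense Y -> Y `<=` adh Z -> dense Z.
Proof.
move=> dY hyz W0 [p0 Wo] oW.
have [y [Wy Yy]] := dY W0 (ex_intro _ p0 Wo) oW.
have [z [Zz Wz]] := hyz y Yy W0 (open_nbhs_nbhs (conj oW Wy)).
by exists z.
Qed.

Lemma exists_small (z : X) (V : set X) : nbhs 0 V -> exists t : K, t != 0 /\ V (t *: z).
Proof.
move=> hV.
have := @scale_continuous K X (0, z) V; rewrite /= scale0r => /(_ hV).
move=> /nbhs_pairP [A1 [A2 [n1 n2 sub]]].
have [e e0 be] := (nbhs_ballP _ _).1 n1.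
have e2 : (e / 2 : K) != 0 by rewrite mulf_neq0 ?invr_eq0 ?pnatr_eq0 // gt_eqF.
exists (e / 2); split => //.
apply: (sub (e / 2) z) (nbhs_singleton n2).
apply: be; rewrite /ball /= sub0r normrN ger0_norm ?divr_ge0 ?ler0n ?ltW //.
by rewrite ltr_pdivrMr ?ltr0n // ltr_pMr // ltr1n.
Qed.

Section Core.
Variables (I : Type) (F : set X).
Hypothesis SF : SFG mul F.
Variable e : nat -> I -> X.
Hypothesis e_inj : forall l i l' i', e l i = e l' i' -> l = l' /\ i = i'.
Hypothesis eF : forall l i, F (e l i).
Variable pi : I -> I -> nat -> I.
Hypothesis pi_inj : forall k i n k' i' n', pi k i n = pi k' i' n' -> [/\ k = k', i = i' & n = n'].
Variable t : I -> nat -> I -> nat -> K.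
Hypothesis t0 : forall k l i n, t k l i n != 0.

Definition Idx := (I * nat * I * nat)%type.
Definition qk (q : Idx) := q.1.1.1.
Definition ql (q : Idx) := q.1.1.2.
Definition qi (q : Idx) := q.1.2.
Definition qn (q : Idx) := q.2.
Definition qa (q : Idx) := e (ql q) (qi q).
Definition qz (q : Idx) := e (ql q).+1 (pi (qk q) (qi q) (qn q)).
Definition qt (q : Idx) := t (qk q) (ql q) (qi q) (qn q).
Definition w (q : Idx) : X := qa q + qt q *: qz q.

Lemma Idx_eq (q q' : Idx) : qk q = qk q' -> ql q = ql q' -> qi q = qi q' -> qn q = qn q' -> q = q'.
Proof. by case: q => [[[? ?] ?] ?]; case: q' => [[[? ?] ?] ?]; rewrite /qk /ql /qi /qn /= => -> -> -> ->. Qed.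

Fixpoint Lam n (p : 'I_n -> Idx) (l : nat) (j : I) : {mpoly K[n]} :=
  match l with
  | 0%N => 0
  | l'.+1 => match [pick k : 'I_n | `[< ql (p k) = l' /\ pi (qk (p k)) (qi (p k)) (qn (p k)) = j >]] with
             | Some k => (qt (p k))^-1 *: ('X_k - Lam p l' (qi (p k)))
             | None => 0
             end
  end.

Lemma LamE n (p : 'I_n -> Idx) (k : 'I_n) : injective p ->
  Lam p (ql (p k)).+1 (pi (qk (p k)) (qi (p k)) (qn (p k))) =
  (qt (p k))^-1 *: ('X_k - Lam p (ql (p k)) (qi (p k))).
Proof.
move=> ip /=; case: pickP => [k' /asboolP [h1 h2] | H].
  have [h3 h4 h5] := pi_inj h2.
  by have -> // : k' = k; apply: ip; apply: Idx_eq.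
by have := H k; move/asboolP => [].
Qed.

Lemma core n (P : {mpoly K[n]}) (p : 'I_n -> Idx) :
  injective p -> P@_0 = 0 -> P != 0 -> peval mul P (fun j => w (p j)) != 0.
Proof.
move=> ip P0 Pn0.
pose v0 := catv (fun j => qa (p j)) (fun j => qz (p j)).
pose L : n.-tuple {mpoly K[n + n]} := [tuple 'X_(lshift n j) + qt (p j) *: 'X_(rshift n j) | j < n].
have Lc i : (tnth L i)@_0 = 0 by rewrite tnth_mktuple mcoeffD mcoeffZ !constX mulr0 addr0.
have E1 : peval mul P (fun j => w (p j)) = peval mul (P \mPo L) v0.
  rewrite peval_comp1 //; apply: peval_ext => i.
  by rewrite tnth_mktuple pevalD pevalZ !pevalX /v0 catv_l catv_r.
have [m [v [g [iv vg vx]]]] := normalize v0.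
pose Q := (P \mPo L) \mPo tX g.
have E2 : peval mul (P \mPo L) v0 = peval mul Q v.
  by rewrite peval_tX; apply: peval_ext => i; rewrite vg.
have Q0 : Q@_0 = 0 by rewrite const_tX const_comp.
have vF j : F (v j).
  have [i ->] := vx j; rewrite /v0 /catv; case: (fintype.split i) => r; exact: eF.
rewrite E1 E2; apply: SF => //.
have ex_dec j : exists d : nat * I, e d.1 d.2 = v j.
  have [i ->] := vx j; rewrite /v0 /catv; case: (fintype.split i) => r.
    by exists (ql (p r), qi (p r)).
  by exists ((ql (p r)).+1, pi (qk (p r)) (qi (p r)) (qn (p r))).
pose dec j := projT1 (cid (ex_dec j)).
have decE j : e (dec j).1 (dec j).2 = v j := projT2 (cid (ex_dec j)).
pose L' : m.-tuple {mpoly K[n]} := [tuple Lam p (dec j).1 (dec j).2 | j < m].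
apply: contra Pn0 => /eqP Qz.
have : Q \mPo L' = P.
  rewrite /Q !comp_mpolyA -[RHS]comp_mpoly_id; congr comp_mpoly.
  apply: eq_from_tnth => i; rewrite !tnth_mktuple comp_mpolyD comp_mpolyZ !comp_mpolyXU.
  rewrite !nth_mktuple !tnth_mktuple comp_mpolyXU -tnth_nth tnth_mktuple comp_mpolyXU -tnth_nth tnth_mktuple.
  have d1 : dec (g (lshift n i)) = (ql (p i), qi (p i)).
    have := decE (g (lshift n i)); rewrite vg /v0 catv_l /qa => /e_inj [].
    by case: (dec _) => ? ? /= -> ->.
  have d2 : dec (g (rshift n i)) = ((ql (p i)).+1, pi (qk (p i)) (qi (p i)) (qn (p i))).
    have := decE (g (rshift n i)); rewrite vg /v0 catv_r /qz => /e_inj [].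
    by case: (dec _) => ? ? /= -> ->.
  rewrite d1 d2 [Lam _ _.+1 _]LamE // scalerA mulfV ?t0 // scale1r addrC subrK //.
by rewrite Qz comp_mpoly0 => <-.
Qed.


Lemma w_inj : injective w.
Proof.
move=> q1 q2 E; apply: boolp.contrapT => ne.
pose p : 'I_2 -> Idx := fun j => if j == ord0 then q1 else q2.
have ip : injective p.
  have h (j : 'I_2) : j != ord0 -> j = lift ord0 ord0.
    by case: j => [[|[|j]] //= Hj] _; apply: val_inj.
  move=> a b; rewrite /p.
  case: eqVneq => [->|a0]; case: eqVneq => [->|b0] //.
  - by move=> E'; exfalso; apply: ne; (exact: E' || exact: (esym E')).
  - by move=> _; rewrite (h a a0) (h b b0).
have P0 : ('X_ord0 - 'X_(lift ord0 ord0) : {mpoly K[2]})@_0 = 0.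
  by rewrite mcoeffB !constX subr0.
have Pn0 : ('X_ord0 - 'X_(lift ord0 ord0) : {mpoly K[2]}) != 0.
  apply/negP => /eqP /(congr1 (meval (fun j : 'I_2 => (j == ord0)%:R))).
  by rewrite mevalB !mevalXU meval0 /= subr0 => /eqP; rewrite oner_eq0.
have := core ip P0 Pn0; rewrite pevalB !pevalX /p /= E subrr.
by rewrite eqxx.
Qed.

Definition Fk (k : I) : set X := fun y => exists q, qk q = k /\ w q = y.

Lemma Fk_choose k n (x : 'I_n -> X) : (forall i, Fk k (x i)) ->
  exists p : 'I_n -> Idx, (forall i, qk (p i) = k) /\ (forall i, w (p i) = x i).
Proof.
move=> H; exists (fun i => projT1 (cid (H i))); split => i.
  by case: (projT2 (cid (H i))).
by case: (projT2 (cid (H i))).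
Qed.

Lemma SFG_Fk k : SFG mul (Fk k).
Proof.
move=> n P x P0 Pn0 ix Fx.
have [p [pk pw]] := Fk_choose Fx.
have ip : injective p by move=> a b E; apply: ix; rewrite -!pw E.
by have := core ip P0 Pn0; rewrite (peval_ext _ (y := x)).
Qed.

Lemma Fk_disj k1 k2 y : k1 <> k2 -> gen mul (Fk k1) y -> gen mul (Fk k2) y -> y = 0.
Proof.
move=> k12 /gen_repr /repr_inj [n1 [P1 [x1 [P10 ix1 Fx1 ->]]]].
move=> /gen_repr /repr_inj [n2 [P2 [x2 [P20 ix2 Fx2 E]]]].
have [p1 [pk1 pw1]] := Fk_choose Fx1.
have [p2 [pk2 pw2]] := Fk_choose Fx2.
have ip1 : injective p1 by move=> a b E'; apply: ix1; rewrite -!pw1 E'.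
have ip2 : injective p2 by move=> a b E'; apply: ix2; rewrite -!pw2 E'.
have ip : injective (catv p1 p2).
  by apply: catv_inj => // i j E'; apply: k12; rewrite -(pk1 i) -(pk2 j) E'.
pose R := (P1 \mPo tX (lshift n2)) - (P2 \mPo tX (@rshift n1 n2)).
have R0 : R@_0 = 0 by rewrite mcoeffB !const_tX P10 P20 subr0.
have ER : peval mul R (fun j => w (catv p1 p2 j)) = 0.
  have h1 : peval mul P1 (fun i => w (catv p1 p2 (lshift n2 i))) = peval mul P1 x1.
    by apply: peval_ext => i; rewrite catv_l pw1.
  have h2 : peval mul P2 (fun i => w (catv p1 p2 (@rshift n1 n2 i))) = peval mul P2 x2.
    by apply: peval_ext => i; rewrite catv_r pw2.
  by rewrite pevalB !peval_tX h1 h2 E subrr.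
have Rz : R = 0.
  apply: boolp.contrapT => /eqP Rn0.
  by have := core ip R0 Rn0; rewrite ER eqxx.
pose z' := catv x1 (fun _ : 'I_n2 => (0 : X)).
have : peval mul R z' = 0 by rewrite Rz peval0.
rewrite pevalB !peval_tX /z' => /eqP; rewrite subr_eq0 => /eqP.
rewrite (peval_ext _ (y := x1)); last by move=> i; rewrite catv_l.
by rewrite (peval_ext P2 (y := fun _ => 0)) ?peval_at0 // => i; rewrite catv_r.
Qed.


Variable B : nat -> set X.
Hypothesis Bb : forall U, nbhs 0 U -> exists k, B k `<=` U.
Hypothesis tB : forall k l i n, B n (t k l i n *: e l.+1 (pi k i n)).
Hypothesis e_surj : forall f, F f -> exists l i, e l i = f.

Lemma Fk_card k : ([set q : Idx | qk q = k] #= [set: I])%card -> (Fk k #= [set: I])%card.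
Proof.
move=> Qc; apply: card_eq_trans Qc.
have -> : Fk k = [set w q | q in [set q : Idx | qk q = k]].
  by apply/seteqP; split => y [q]; [move=> [? <-]; exists q | move=> ? <-; exists q].
by apply: inj_card_eq => x y _ _; apply: w_inj.
Qed.

Lemma Fk_gen k : gen mul (Fk k) `<=` gen mul F.
Proof.
apply: gen_sub; first exact: gen_subalg.
move=> _ [q [_ <-]]; have [_ gD gZ _] := gen_subalg F.
by apply: gD; [|apply: gZ]; apply: sub_gen; apply: eF.
Qed.

Lemma Fk_dense k : dense (gen mul F) -> dense (gen mul (Fk k)).
Proof.
move=> dF; apply: (dense_adh dF); apply: gen_sub; first exact/adh_subalg/gen_subalg.
move=> f /e_surj [l [i <-]] V hV.
have : nbhs (e l i + 0) V by rewrite addr0.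
move=> /(@add_continuous _ (e l i, 0)) /nbhs_pairP [A1 [A2 [n1 n2 sub]]].
have [n Bn] := Bb n2.
exists (w (k, l, i, n)); split.
  by apply: sub_gen; exists (k, l, i, n).
exact: (sub _ _ (nbhs_singleton n1) (Bn _ (tB k l i n))).
Qed.

Lemma main_core (M : set X) : (forall k, ([set q : Idx | qk q = k] #= [set: I])%card) ->
  dense (gen mul F) -> gen mul F `<=` M `|` [set 0] ->
  infinitely_strongly_dense_algebrable mul I M.
Proof.
move=> Qc dF FM; exists (fun k => gen mul (Fk k)); split.
  move=> k; split; last split.
  - by exists (Fk k); split; [exact: SFG_Fk | split; [exact: Fk_card|]].
  - exact: Fk_dense.
  - by move=> y /Fk_gen /FM.
move=> k1 k2 k12; apply/seteqP; split.
  by move=> y [g1 g2]; rewrite (Fk_disj k12 g1 g2).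
move=> y ->; split; [by case: (gen_subalg (Fk k1)) | by case: (gen_subalg (Fk k2))].
Qed.

End Core.

End Unit.

Theorem theorem4p7 (R : realType) (b : bool) (I : Type)
  (X : topologicalLmodType (scalarK R b)) (mul : X -> X -> X) (M : set X) :
  infinite_set [set: I] ->
  comm_top_algebra mul ->
  alpha_generated mul I ->
  first_countable X ->
  (infinitely_strongly_dense_algebrable mul I M <->
   strongly_dense_algebrable mul I M).
Proof.
move=> Iinf [mulA mulC mulL mulc] _ fc; split.
  move=> [Yk [HY _]]; have [k0 _] := infinite_setN0 Iinf.
  by exists (Yk k0); apply: HY.
move=> [Y [[F [SF [FI ->]]] [dF FM]]].
have [io ioi] := inf_nat Iinf.
have [sq sqi] := sq_inj ioi.
have [eb [ebi ebs]] := natI_bij ioi sqi.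
have [bF [bFF bFi bFs]] := bij_of_eq' (0 : X) (card_esym FI).
pose e l i := bF (eb (l, i)).
have e_inj l i l' i' : e l i = e l' i' -> l = l' /\ i = i'.
  by move=> /(bFi _ _ Logic.I Logic.I) /ebi [-> ->].
have eF l i : F (e l i) by apply: bFF.
have e_surj f : F f -> exists l i, e l i = f.
  move=> /bFs [x _ <-]; have [[l i] E] := ebs x.
  by exists l, i; rewrite /e E.
pose pi (k i : I) (n : nat) := sq (k, sq (i, io n)).
have pi_inj k i n k' i' n' : pi k i n = pi k' i' n' -> [/\ k = k', i = i' & n = n'].
  by move=> /sqi [-> /sqi [-> /ioi ->]].
have [B [Bn Bb]] := fc 0.
pose t k l i n := projT1 (cid (exists_small (e l.+1 (pi k i n)) (Bn n))).
have t0 k l i n : t k l i n != 0 by case: (projT2 (cid (exists_small (e l.+1 (pi k i n)) (Bn n)))).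
have tB k l i n : B n (t k l i n *: e l.+1 (pi k i n)).
  by case: (projT2 (cid (exists_small (e l.+1 (pi k i n)) (Bn n)))).
apply: (main_core mulA mulC mulL mulc SF e_inj eF pi_inj t0 Bb tB e_surj) => // k.
exact: Qk_card ioi sqi.
Qed.
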